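(* Let $x\in\mathrm{SUBT}(K_n)$ be such that $G_x$ is 3-edge-connected and cubic, and let $\mathcal{C}\subseteq E_x$ be any 2-factor of $G_x$. Define $y\in\mathbb{R}^{E_n}$ by $y_e=\frac12$ for $e\in\mathcal{C}$, $y_e=1$ for $e\in E_x\setminus\mathcal{C}$, and $y_e=0$ otherwise. Then $y\in\mathrm{SUBT}(K_n)$.
   Context: $K_n$ is the complete graph on $V_n=\{1,\dots,n\}$ with edge set $E_n$; $\delta(U)$ denotes the set of edges with exactly one endpoint in $U$. $\mathrm{SUBT}(K_n)=\{x\in[0,1]^{E_n}: x(\delta(\{i\}))=2\ \forall i,\ x(\delta(U))\ge2\ \forall\,\emptyset\ne U\subsetneq V_n\}$. $G_x=(V_n,E_x)$ with $E_x=\{e:x_e>0\}$. A 2-factor is a spanning subgraph in which every vertex has degree exactly 2. *)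

(* Defs.v *)
From HB Require Import structures.
From mathcomp Require Import all_boot all_order all_algebra.
Set Implicit Arguments. Unset Strict Implicit. Unset Printing Implicit Defensive.
Import Order.TTheory GRing.Theory Num.Theory.
Local Open Scope ring_scope.

(* Vertices of K_n: 'I_n (i.e. {0,...,n-1}, standing for {1,...,n}).
   Edges of K_n: two-element subsets of the vertex set. *)
Definition En (n : nat) : {set {set 'I_n}} := [set e : {set 'I_n} | #|e| == 2%N].

Definition delta (n : nat) (U : {set 'I_n}) : {set {set 'I_n}} :=
  [set e in En n | #|e :&: U| == 1%N].

Definition xsum (R : numDomainType) (n : nat) (x : {set 'I_n} -> R)
  (F : {set {set 'I_n}}) : R := \sum_(e in F) x e.

(* SUBT(K_n); a vector in R^{E_n} is a function on edges (values off En are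
   irrelevant). *)
Definition SUBT (R : numDomainType) (n : nat) (x : {set 'I_n} -> R) : Prop :=
  [/\ (forall e, e \in En n -> 0 <= x e <= 1),
      (forall i : 'I_n, xsum x (delta [set i]) = 2) &
      (forall U : {set 'I_n}, U != set0 -> U != setT -> 2 <= xsum x (delta U))].

Definition Ex (R : numDomainType) (n : nat) (x : {set 'I_n} -> R) : {set {set 'I_n}} :=
  [set e in En n | 0 < x e].

Definition adj (n : nat) (E : {set {set 'I_n}}) : rel 'I_n :=
  fun u v => [set u; v] \in E.

Definition connected_graph (n : nat) (E : {set {set 'I_n}}) : Prop :=
  forall u v : 'I_n, connect (adj E) u v.

Definition k_edge_connected (k n : nat) (E : {set {set 'I_n}}) : Prop :=
  forall F : {set {set 'I_n}}, F \subset E -> (#|F| < k)%N ->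
    connected_graph (E :\: F).

Definition degree (n : nat) (E : {set {set 'I_n}}) (i : 'I_n) : nat :=
  #|[set e in E | i \in e]|.

Definition cubic (n : nat) (E : {set {set 'I_n}}) : Prop :=
  forall i : 'I_n, degree E i = 3%N.

Definition two_factor (n : nat) (E C : {set {set 'I_n}}) : Prop :=
  C \subset E /\ forall i : 'I_n, degree C i = 2%N.

(* Main.v *)
Require Import Defs.
From HB Require Import structures.
From mathcomp Require Import all_boot all_order all_algebra.
From mathcomp Require Import lra zify.
Import Order.TTheory GRing.Theory Num.Theory.
Local Open Scope ring_scope.
Lemma sum_ind (R : numDomainType) (T : finType) (F A : {set T}) :
  \sum_(e in F) ((e \in A)%:R : R) = #|F :&: A|%:R.
Proof.
rewrite -natr_sum; congr (_%:R).
rewrite -sum1_card big_mkcond /= [RHS]big_mkcond /=.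
apply: eq_bigr => e _; rewrite !inE; by case: (e \in F); case: (e \in A).
Qed.

Lemma sum_split (R : numFieldType) (T : finType) (E C F : {set T}) : C \subset E ->
 \sum_(e in F) (if e \in C then 2^-1 else if e \in E then 1 else 0 : R)
  = #|F :&: C|%:R / 2 + #|F :&: (E :\: C)|%:R.
Proof.
move=> CE.
rewrite (eq_bigr (fun e => 2^-1 * (e \in C)%:R + (e \in E :\: C)%:R)); last first.
  move=> e _; rewrite !inE; case: (boolP (e \in C)) => hC /=.
    by rewrite mulr1 addr0.
  by rewrite mulr0 add0r; case: (e \in E).
by rewrite big_split /= -mulr_sumr !sum_ind mulrC.
Qed.

Lemma ExEn (R : numDomainType) n (x : {set 'I_n} -> R) : Ex x \subset En n.
Proof. by apply/subsetP => e; rewrite inE => /andP[]. Qed.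

Lemma deltaI1 n (A : {set {set 'I_n}}) (i : 'I_n) : A \subset En n ->
  delta [set i] :&: A = [set e in A | i \in e].
Proof.
move=> AE; apply/setP => e; rewrite /delta !inE.
case: (boolP (e \in A)) => eA; last by rewrite !andbF.
rewrite andbT; have := subsetP AE _ eA; rewrite inE => -> /=.
case: (boolP (i \in e)) => h.
  have ->: e :&: [set i] = [set i].
    by apply/setP => z; rewrite !inE; case: (eqVneq z i) => [->|]; rewrite ?h ?andbT ?andbF.
  by rewrite cards1.
have ->: e :&: [set i] = set0.
  by apply/setP => z; rewrite !inE; case: (eqVneq z i) => [->|]; rewrite ?(negbTE h) ?andbT ?andbF.
by rewrite cards0.
Qed.

Lemma cut_parity n (C : {set {set 'I_n}}) (U : {set 'I_n}) :
  C \subset En n -> (forall i, degree C i = 2%N) ->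
  ~~ odd #|delta U :&: C|.
Proof.
move=> CE deg.
have H1 : (\sum_(i in U) degree C i = \sum_(e in C) #|e :&: U|)%N.
  rewrite /degree.
  transitivity (\sum_(i in U) \sum_(e in C) (i \in e : nat))%N.
    apply: eq_bigr => i _; rewrite -sum1_card big_mkcond [RHS]big_mkcond /=.
    by apply: eq_bigr => e _; rewrite !inE; case: (e \in C); case: (i \in e).
  rewrite exchange_big /=; apply: eq_bigr => e _.
  rewrite -sum1_card big_mkcond [RHS]big_mkcond /=.
  by apply: eq_bigr => i _; rewrite !inE; case: (i \in e); case: (i \in U).
have H2 : (\sum_(i in U) degree C i = 2 * #|U|)%N.
  by rewrite (eq_bigr (fun _ => 2%N)) // sum_nat_const mulnC.
have H3 : (\sum_(e in C) #|e :&: U| = #|delta U :&: C| + 2 * \sum_(e in C) (#|e :&: U| == 2%N))%N.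
  rewrite big_distrr /=.
  transitivity (\sum_(e in C) ((#|e :&: U| == 1%N) + 2 * (#|e :&: U| == 2%N)))%N.
    apply: eq_bigr => e eC.
    have : (#|e :&: U| <= 2)%N.
      have := subsetP CE _ eC; rewrite inE => /eqP <-.
      by apply: subset_leq_card; apply: subsetIl.
    by case: #|e :&: U| => [|[|[|]]].
  rewrite big_split /=; congr (_ + _)%N.
  rewrite -sum1_card big_mkcond [RHS]big_mkcond /=.
  apply: eq_bigr => e _; rewrite /delta !inE.
  case: (boolP (e \in C)) => eC /=; last by rewrite andbF.
  rewrite andbT; have := subsetP CE _ eC; rewrite inE => -> /=; by case: (_ == _).
move: H1; rewrite H2 H3 => H.
have := congr1 odd H.
rewrite oddD !oddM /= => Ho.
apply/negP => Hodd; move: Ho; by rewrite Hodd.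
Qed.

Lemma cut3 n (E : {set {set 'I_n}}) (U : {set 'I_n}) :
  E \subset En n -> k_edge_connected 3 E -> U != set0 -> U != setT ->
  (3 <= #|delta U :&: E|)%N.
Proof.
move=> EE kc U0 UT.
rewrite leqNgt; apply/negP => Hlt.
have := kc (delta U :&: E) (subsetIr _ _) Hlt => conn.
have [u uU] : exists u, u \in U.
  by case/set0Pn: U0 => u; exists u.
have [v vU] : exists v, v \notin U.
  case: (pickP (fun v => v \notin U)) => [v hv|h]; first by exists v.
  case/negP: UT; apply/eqP/setP => z; rewrite inE; have := h z; by case: (z \in U).
have step : forall a b, [set a; b] \in E :\: (delta U :&: E) -> a \in U -> b \in U.
  move=> a b; rewrite /delta !inE => /andP[hF hE] ha.
  apply/negPn/negP => hb; move: hF.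
  have := subsetP EE _ hE; rewrite inE => hc; rewrite hE hc /=.
  have ->: [set a; b] :&: U = [set a].
    apply/setP => z; rewrite !inE; case: (eqVneq z a) => [->|za] /=; first by rewrite ha.
    by case: (eqVneq z b) => [->|] //=; rewrite (negbTE hb).
  by rewrite cards1.
have cl : closed (adj (E :\: (delta U :&: E))) (mem U).
  move=> a b; rewrite /adj => hab; apply/idP/idP; first exact: step.
  by apply: step; rewrite setUC.
have := closed_connect cl (conn u v); rewrite uU => /esym hv.
by rewrite hv in vU.
Qed.

Theorem mainTheorem7 (R : realFieldType) (n : nat) (x : {set 'I_n} -> R)
  (C : {set {set 'I_n}}) :
  SUBT x ->
  k_edge_connected 3 (Ex x) ->
  cubic (Ex x) ->
  two_factor (Ex x) C ->
  SUBT (fun e : {set 'I_n} =>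
          if e \in C then 2^-1 else if e \in Ex x then 1 else 0 : R).
Proof.
move=> _ kc cub [CE degC].
have EE := @ExEn R n x.
move: kc cub CE EE; generalize (Ex x) => E kc cub CE EE.
have CEn : C \subset En n := subset_trans CE EE.
split.
- move=> e _; case: (e \in C); last case: (e \in E).
  + apply/andP; split; lra.
  + by rewrite ler01 lexx.
  + by rewrite lexx ler01.
- move=> i; rewrite /xsum sum_split // deltaI1 // deltaI1; last first.
    by apply: subset_trans EE; apply: subsetDl.
  have h1 : #|[set e in C | i \in e]| = 2%N by have := degC i.
  have h2 : #|[set e in E :\: C | i \in e]| = 1%N.
    have := cub i; rewrite /degree => h3.
    have := cardsID C [set e in E | i \in e]; rewrite h3.
    have -> : [set e in E | i \in e] :&: C = [set e in C | i \in e].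
      apply/setP => e; rewrite !inE; case: (boolP (e \in C)) => eC.
        by rewrite (subsetP CE _ eC) andbT.
      by rewrite andbF.
    have -> : [set e in E | i \in e] :\: C = [set e in E :\: C | i \in e].
      by apply/setP => e; rewrite !inE; case: (e \in C); case: (e \in E).
    rewrite h1 => h4; lia.
  rewrite h1 h2; lra.
- move=> U U0 UT; rewrite /xsum sum_split //.
  set a := #|delta U :&: C|; set b := #|delta U :&: (E :\: C)|.
  have hab : (a + b)%N = #|delta U :&: E|.
    rewrite /a /b -(cardsID C (delta U :&: E)).
    have e1 : delta U :&: C = (delta U :&: E) :&: C.
      by rewrite -setIA (setIidPr CE).
    have e2 : delta U :&: (E :\: C) = (delta U :&: E) :\: C.
      by rewrite !setDE setIA.
    by rewrite e1 e2.
  have h3 := @cut3 n E U EE kc U0 UT; rewrite -hab in h3.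
  have hpar := @cut_parity n C U CEn degC; rewrite -/a in hpar.
  have h4 : (4 <= a + 2 * b)%N.
    have := odd_double_half a; rewrite (negbTE hpar) add0n => ha.
    rewrite -ha in h3 *; rewrite -!muln2 in h3 *; lia.
  have : (4%:R <= (a + 2 * b)%:R :> R) by rewrite ler_nat.
  rewrite natrD natrM => h5; lra.
Qed.
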